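(* Let $\div$ be a belief change operator satisfying (C1)–(C7) and (C8), (C9). Then the following are equivalent: (a) $\div$ satisfies, for all epistemic states $\Psi$ and formulas $\alpha,\beta,\gamma$: (C10) if $\neg\alpha\models\gamma$ then $\Psi\div\beta\models\gamma$ implies $\Psi\div\alpha\div\beta\models\gamma$; and (C11) if $\alpha\models\gamma$ then $\Psi\div\alpha\div\beta\models\gamma$ implies $\Psi\div\beta\models\gamma$. (b) There is a faithful assignment $\Psi\mapsto\le_\Psi$ with $[\![\Psi\div\alpha]\!]=[\![\Psi]\!]\cup\min([\![\neg\alpha]\!],\le_\Psi)$ for all $\Psi,\alpha$, which satisfies for all $\Psi,\alpha$ and worlds $\omega_1\in[\![\neg\alpha]\!]$, $\omega_2\in[\![\alpha]\!]$: (CR10) $\omega_1<_\Psi\omega_2\Rightarrow\omega_1<_{\Psi\div\alpha}\omega_2$; (CR11) $\omega_1\le_\Psi\omega_2\Rightarrow\omega_1\le_{\Psi\div\alpha}\omega_2$.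
   Context: $\Sigma$ is a nonempty finite set of propositional variables, $\mathcal{L}$ the propositional language over $\Sigma$, $\Omega$ the set of worlds. $[\![\alpha]\!]$ is the set of models of $\alpha$; for a set $X$ of formulas $[\![X]\!]$ is the set of worlds satisfying all of $X$; $Cn(X)=\{\beta\mid X\models\beta\}$. $\mathcal{E}$ is a set of epistemic states; each $\Psi\in\mathcal{E}$ has a deductively closed belief set $\mathrm{Bel}(\Psi)\subseteq\mathcal{L}$; $\Psi\models\alpha$ iff $\alpha\in\mathrm{Bel}(\Psi)$; $[\![\Psi]\!]=[\![\mathrm{Bel}(\Psi)]\!]$. A belief change operator is a map $\div:\mathcal{E}\times\mathcal{L}\to\mathcal{E}$; $\Psi\div\alpha\div\beta$ means $(\Psi\div\alpha)\div\beta$. Postulates, for all $\Psi,\alpha,\beta$: (C1) $\mathrm{Bel}(\Psi\div\alpha)\subseteq\mathrm{Bel}(\Psi)$; (C2) if $\alpha\notin\mathrm{Bel}(\Psi)$ then $\mathrm{Bel}(\Psi)\subseteq\mathrm{Bel}(\Psi\div\alpha)$; (C3) if $\alpha\not\equiv\top$ then $\alpha\notin\mathrm{Bel}(\Psi\div\alpha)$; (C4) $\mathrm{Bel}(\Psi)\subseteq Cn(\mathrm{Bel}(\Psi\div\alpha)\cup\{\alpha\})$; (C5) if $\alpha\equiv\beta$ then $\mathrm{Bel}(\Psi\div\alpha)=\mathrm{Bel}(\Psi\div\beta)$; (C6) $\mathrm{Bel}(\Psi\div\alpha)\cap\mathrm{Bel}(\Psi\div\beta)\subseteq\mathrm{Bel}(\Psi\div(\alpha\land\beta))$;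 (C7) if $\beta\notin\mathrm{Bel}(\Psi\div(\alpha\land\beta))$ then $\mathrm{Bel}(\Psi\div(\alpha\land\beta))\subseteq\mathrm{Bel}(\Psi\div\beta)$; (C8) if $\neg\alpha\models\beta$ then $\mathrm{Bel}(\Psi\div\alpha\div\beta) =_\alpha \mathrm{Bel}(\Psi\div\beta)$; (C9) if $\alpha\models\beta$ then $\mathrm{Bel}(\Psi\div\alpha\div\beta) =_{\neg\beta} \mathrm{Bel}(\Psi\div\beta)$. A belief change operator satisfying (C1)–(C7) is called an AGM contraction operator for epistemic states. For a total preorder $\le$ on $\Omega$ and $\Omega'\subseteq\Omega$, $\min(\Omega',\le)=\{\omega\in\Omega'\mid \omega\le\omega' \text{ for all }\omega'\in\Omega'\}$; $<$ is the strict part and $\simeq$ the induced equivalence. A faithful assignment maps each $\Psi$ to a total preorder $\le_\Psi$ on $\Omega$ with (FA1) $\omega_1,\omega_2\in[\![\Psi]\!]\Rightarrow\omega_1\simeq_\Psi\omega_2$ and (FA2) $\omega_1\in[\![\Psi]\!],\omega_2\notin[\![\Psi]\!]\Rightarrow\omega_1<_\Psi\omega_2$. Known fact: $\div$ satisfies (C1)–(C7) iff there is a faithful assignment with $[\![\Psi\div\alpha]\!]=[\![\Psi]\!]\cup\min([\![\neg\alpha]\!],\le_\Psi)$ for all $\Psi,\alpha$. $\alpha$-equivalence: for $\Omega_1,\Omega_2\subseteq\Omega$, $\Omega_1=_\alpha\Omega_2$ iff $\Omega_1\cap[\![\alpha]\!]=\Omega_2\cap[\![\alpha]\!]$; for sets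 of formulas $X=_\alpha Y$ iff $[\![X]\!]=_\alpha[\![Y]\!]$. *)

(* Defs.v *)
From mathcomp Require Import all_boot.
Set Implicit Arguments. Unset Strict Implicit. Unset Printing Implicit Defensive.

Section Logic.
Variable Sigma : finType.

Inductive form : Type :=
| fVar : Sigma -> form
| fTop : form
| fBot : form
| fNeg : form -> form
| fAnd : form -> form -> form
| fOr  : form -> form -> form
| fImp : form -> form -> form.

Definition world := Sigma -> bool.

Fixpoint sat (w : world) (f : form) : bool :=
  match f with
  | fVar x => w x
  | fTop => true
  | fBot => false
  | fNeg g => ~~ sat w g
  | fAnd g h => sat w g && sat w h
  | fOr g h => sat w g || sat w h
  | fImp g h => sat w g ==> sat w h
  end.

Definition fset := form -> Prop.

Definition modsX (X : fset) (w : world) : Prop := forall f, X f -> sat w f.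

Definition entailsX (X : fset) (b : form) : Prop :=
  forall w, modsX X w -> sat w b.
Definition Cn (X : fset) : fset := fun b => entailsX X b.

Definition deductively_closed (X : fset) : Prop := forall b, entailsX X b -> X b.

Definition fentails (a b : form) : Prop := forall w, sat w a -> sat w b.
Definition fequiv (a b : form) : Prop := forall w, sat w a = sat w b.
Definition tautology (a : form) : Prop := forall w, sat w a.

Definition subsetF (X Y : fset) : Prop := forall f, X f -> Y f.
Definition unionF (X : fset) (a : form) : fset := fun f => X f \/ f = a.
Definition interF (X Y : fset) : fset := fun f => X f /\ Y f.

Definition aequivF (a : form) (X Y : fset) : Prop :=
  forall w, sat w a -> (modsX X w <-> modsX Y w).

Definition total_preorder (le : world -> world -> Prop) : Prop :=
  (forall w1 w2 w3, le w1 w2 -> le w2 w3 -> le w1 w3) /\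
  (forall w1 w2, le w1 w2 \/ le w2 w1).
Definition strict (le : world -> world -> Prop) (w1 w2 : world) : Prop :=
  le w1 w2 /\ ~ le w2 w1.
Definition min_set (O : world -> Prop) (le : world -> world -> Prop)
  (w : world) : Prop := O w /\ forall w', O w' -> le w w'.

Section Operator.
Variable E : Type.
Variable Bel : E -> fset.
Variable contr : E -> form -> E.

Definition modsE (Psi : E) : world -> Prop := modsX (Bel Psi).

Definition C1 := forall Psi a, subsetF (Bel (contr Psi a)) (Bel Psi).
Definition C2 := forall Psi a, ~ Bel Psi a -> subsetF (Bel Psi) (Bel (contr Psi a)).
Definition C3 := forall Psi a, ~ tautology a -> ~ Bel (contr Psi a) a.
Definition C4 := forall Psi a, subsetF (Bel Psi) (Cn (unionF (Bel (contr Psi a)) a)).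
Definition C5 := forall Psi a b, fequiv a b ->
  (forall f, Bel (contr Psi a) f <-> Bel (contr Psi b) f).
Definition C6 := forall Psi a b,
  subsetF (interF (Bel (contr Psi a)) (Bel (contr Psi b))) (Bel (contr Psi (fAnd a b))).
Definition C7 := forall Psi a b, ~ Bel (contr Psi (fAnd a b)) b ->
  subsetF (Bel (contr Psi (fAnd a b))) (Bel (contr Psi b)).
Definition C8 := forall Psi a b, fentails (fNeg a) b ->
  aequivF a (Bel (contr (contr Psi a) b)) (Bel (contr Psi b)).
Definition C9 := forall Psi a b, fentails a b ->
  aequivF (fNeg b) (Bel (contr (contr Psi a) b)) (Bel (contr Psi b)).
Definition C10 := forall Psi a b g, fentails (fNeg a) g ->
  Bel (contr Psi b) g -> Bel (contr (contr Psi a) b) g.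
Definition C11 := forall Psi a b g, fentails a g ->
  Bel (contr (contr Psi a) b) g -> Bel (contr Psi b) g.

Definition AGM_contraction := C1 /\ C2 /\ C3 /\ C4 /\ C5 /\ C6 /\ C7.

Definition faithful_assignment (le : E -> world -> world -> Prop) : Prop :=
  (forall Psi, total_preorder (le Psi)) /\
  (forall Psi w1 w2, modsE Psi w1 -> modsE Psi w2 -> le Psi w1 w2 /\ le Psi w2 w1) /\
  (forall Psi w1 w2, modsE Psi w1 -> ~ modsE Psi w2 -> strict (le Psi) w1 w2).

Definition represents (le : E -> world -> world -> Prop) : Prop :=
  forall Psi a w, modsE (contr Psi a) w <->
    (modsE Psi w \/ min_set (fun w' => sat w' (fNeg a)) (le Psi) w).

Definition CR10 (le : E -> world -> world -> Prop) : Prop :=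
  forall Psi a w1 w2, sat w1 (fNeg a) -> sat w2 a ->
    strict (le Psi) w1 w2 -> strict (le (contr Psi a)) w1 w2.
Definition CR11 (le : E -> world -> world -> Prop) : Prop :=
  forall Psi a w1 w2, sat w1 (fNeg a) -> sat w2 a ->
    le Psi w1 w2 -> le (contr Psi a) w1 w2.

End Operator.
End Logic.

(* Main.v *)
Require Import Defs.
From mathcomp Require Import all_boot.
From Stdlib Require Import Classical FunctionalExtensionality.

Definition lit {Sigma : finType} (w : world Sigma) (x : Sigma) : form Sigma :=
  if w x then fVar x else fNeg (fVar x).
Definition chi {Sigma : finType} (w : world Sigma) : form Sigma :=
  foldr (fun x acc => fAnd (lit w x) acc) (fTop Sigma) (enum Sigma).
Definition a12 {Sigma : finType} (w1 w2 : world Sigma) : form Sigma :=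
  fAnd (fNeg (chi w1)) (fNeg (chi w2)).

Lemma sat_chi {Sigma : finType} (v w : world Sigma) : sat v (chi w) <-> v = w.
Proof.
have -> : sat v (chi w) = all (fun x => v x == w x) (enum Sigma).
  rewrite /chi; elim: (enum Sigma) => [//|x s IH]; rewrite /= IH /lit.
  simpl; destruct (w x); simpl; destruct (v x); reflexivity.
split.
- move/allP => H; apply: functional_extensionality => x.
  by apply/eqP; apply: H; rewrite mem_enum.
- by move=> ->; apply/allP => x _.
Qed.

Lemma sat_a12 {Sigma : finType} (v w1 w2 : world Sigma) :
  sat v (a12 w1 w2) <-> v <> w1 /\ v <> w2.
Proof.
rewrite /a12 /=; split.
- case/andP => /negP H1 /negP H2; split => E; [apply: H1|apply: H2]; exact/sat_chi.
- case=> H1 H2; apply/andP; split; apply/negP => /sat_chi; auto.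
Qed.

Lemma nsat_a12 {Sigma : finType} (v w1 w2 : world Sigma) :
  ~~ sat v (a12 w1 w2) <-> v = w1 \/ v = w2.
Proof.
split.
- move/negP => H; apply: NNPP => H'; apply: H; apply/sat_a12; split => E; apply: H'; auto.
- move=> H; apply/negP => /sat_a12 [H1 H2]; case: H; auto.
Qed.

Lemma a12C {Sigma : finType} (w1 w2 : world Sigma) : fequiv (a12 w1 w2) (a12 w2 w1).
Proof. by move=> v; rewrite /a12 /= andbC. Qed.

Lemma bel_of {Sigma : finType} (E : Type) (Bel : E -> fset Sigma)
  (Hcl : forall Psi, deductively_closed (Bel Psi)) Psi f :
  (forall w, modsE Bel Psi w -> sat w f) -> Bel Psi f.
Proof. by move=> H; apply: Hcl. Qed.

Lemma not_mods {Sigma : finType} (E : Type) (Bel : E -> fset Sigma) Psi w :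
  ~ modsE Bel Psi w -> exists f, Bel Psi f /\ ~ sat w f.
Proof.
move=> H; apply: NNPP => H'; apply: H => f Hf; apply: NNPP => Hs; apply: H'; eauto.
Qed.


Lemma W1 {Sigma : finType} {E : Type} {Bel : E -> fset Sigma} {contr : E -> form Sigma -> E}
  (H1 : C1 Bel contr) {Psi a w} :
  modsE Bel Psi w -> modsE Bel (contr Psi a) w.
Proof. move=> H f Hf; apply: H; exact: H1 Hf. Qed.

Lemma W2 {Sigma : finType} {E : Type} {Bel : E -> fset Sigma} {contr : E -> form Sigma -> E}
  (H2 : C2 Bel contr) {Psi a w0 w} :
  modsE Bel Psi w0 -> ~~ sat w0 a -> modsE Bel (contr Psi a) w -> modsE Bel Psi w.
Proof.
move=> Hw0 Hn Hw f Hf; apply: Hw; apply: (H2 Psi a) => // Hb.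
by have := Hw0 a Hb; rewrite (negbTE Hn).
Qed.

Lemma W3 {Sigma : finType} {E : Type} {Bel : E -> fset Sigma} {contr : E -> form Sigma -> E}
  (Hcl : forall Psi, deductively_closed (Bel Psi))
  (H3 : C3 Bel contr) {Psi a w0} :
  ~~ sat w0 a -> exists w, modsE Bel (contr Psi a) w /\ ~~ sat w a.
Proof.
move=> Hn0; apply: NNPP => Hn; apply: (H3 Psi a).
- by move=> Ht; have := Ht w0; rewrite (negbTE Hn0).
- apply: Hcl => w Hw; apply: NNPP => Hs; apply: Hn; exists w; split => //; exact/negP.
Qed.

Lemma W4 {Sigma : finType} {E : Type} {Bel : E -> fset Sigma} {contr : E -> form Sigma -> E}
  (H4 : C4 Bel contr) {Psi a w} :
  modsE Bel (contr Psi a) w -> sat w a -> modsE Bel Psi w.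
Proof.
move=> Hw Ha f Hf; apply: (H4 Psi a f Hf w) => g [Hg|->]; [exact: Hw g Hg | exact Ha].
Qed.

Lemma W5 {Sigma : finType} {E : Type} {Bel : E -> fset Sigma} {contr : E -> form Sigma -> E}
  (H5 : C5 Bel contr) {Psi a b w} :
  fequiv a b -> modsE Bel (contr Psi a) w -> modsE Bel (contr Psi b) w.
Proof. move=> Hab Hw f Hf; apply: Hw; exact/(H5 Psi a b Hab). Qed.

Lemma W6 {Sigma : finType} {E : Type} {Bel : E -> fset Sigma} {contr : E -> form Sigma -> E}
  (Hcl : forall Psi, deductively_closed (Bel Psi))
  (H6 : C6 Bel contr) {Psi a b w} :
  modsE Bel (contr Psi (fAnd a b)) w ->
  modsE Bel (contr Psi a) w \/ modsE Bel (contr Psi b) w.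
Proof.
move=> Hw; apply: NNPP => Hn.
have [f [Hf Hsf]] := @not_mods _ _ Bel _ _ (fun H => Hn (or_introl H)).
have [g [Hg Hsg]] := @not_mods _ _ Bel _ _ (fun H => Hn (or_intror H)).
have : sat w (fOr f g).
  apply: Hw; apply: H6; split; apply: Hcl => v Hv /=.
  - by rewrite (Hv f Hf).
  - by rewrite (Hv g Hg) orbT.
by move=> /= /orP [].
Qed.

Lemma W7 {Sigma : finType} {E : Type} {Bel : E -> fset Sigma} {contr : E -> form Sigma -> E}
  (H7 : C7 Bel contr) {Psi a b w0 w} :
  modsE Bel (contr Psi (fAnd a b)) w0 -> ~~ sat w0 b ->
  modsE Bel (contr Psi b) w -> modsE Bel (contr Psi (fAnd a b)) w.
Proof.
move=> Hw0 Hn Hw f Hf; apply: Hw; apply: (H7 Psi a b) => // Hb.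
by have := Hw0 b Hb; rewrite (negbTE Hn).
Qed.

Lemma SA {Sigma : finType} {E : Type} {Bel : E -> fset Sigma} {contr : E -> form Sigma -> E}
  (Hcl : forall Psi, deductively_closed (Bel Psi)) (HA : AGM_contraction Bel contr) {Psi a b w} :
  fentails b a -> modsE Bel (contr Psi b) w -> ~~ sat w a -> modsE Bel (contr Psi a) w.
Proof.
case: HA => H1 [H2 [H3 [H4 [H5 [H6 H7]]]]].
move=> Hba Hw Hn.
have Heq : fequiv b (fAnd a (fOr b (fNeg a))).
  move=> v /=; move: (Hba v); destruct (sat v b), (sat v a); simpl; auto.
  by move=> H; case: (H isT).
case: (W6 Hcl H6 (W5 H5 Heq Hw)) => // Hd.
apply: W1 => //; apply: (W4 H4 Hd) => /=; by rewrite Hn orbT.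
Qed.

Lemma AR {Sigma : finType} {E : Type} {Bel : E -> fset Sigma} {contr : E -> form Sigma -> E}
  (HA : AGM_contraction Bel contr) {Psi a b w0 w} :
  fentails b a -> modsE Bel (contr Psi b) w0 -> ~~ sat w0 a ->
  modsE Bel (contr Psi a) w -> modsE Bel (contr Psi b) w.
Proof.
case: HA => H1 [H2 [H3 [H4 [H5 [H6 H7]]]]].
move=> Hba Hw0 Hn Hw.
have Heq : fequiv (fAnd b a) b.
  move=> v /=; move: (Hba v); destruct (sat v b), (sat v a); simpl; auto.
have Heq' : fequiv b (fAnd b a) by move=> v; rewrite Heq.
apply: (W5 H5 Heq); apply: (W7 H7 (W5 H5 Heq' Hw0) Hn Hw).
Qed.

Definition canon {Sigma : finType} {E : Type} (Bel : E -> fset Sigma)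
  (contr : E -> form Sigma -> E) (Psi : E) (w1 w2 : world Sigma) : Prop :=
  modsE Bel (contr Psi (a12 w1 w2)) w1.

Lemma sat_a3 {Sigma : finType} (v w1 w2 w3 : world Sigma) :
  sat v (fAnd (a12 w1 w2) (fNeg (chi w3))) <-> [/\ v <> w1, v <> w2 & v <> w3].
Proof.
rewrite /=; split.
- case/andP => /sat_a12 [H1 H2] /negP H3; split => // E; apply: H3; exact/sat_chi.
- case=> H1 H2 H3; apply/andP; split; first exact/sat_a12.
  by apply/negP => /sat_chi.
Qed.

Lemma canon_tp {Sigma : finType} {E : Type} {Bel : E -> fset Sigma} {contr : E -> form Sigma -> E}
  (Hcl : forall Psi, deductively_closed (Bel Psi)) (HA : AGM_contraction Bel contr) Psi :
  total_preorder (canon Bel contr Psi).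
Proof.
have HA' := HA; case: HA' => H1 [H2 [H3 [H4 [H5 [H6 H7]]]]].
split.
- move=> w1 w2 w3 H12 H23; rewrite /canon.
  set a3 := fAnd (a12 w1 w2) (fNeg (chi w3)).
  have n1 : ~~ sat w1 a3 by apply/negP => /sat_a3 [].
  have n2 : ~~ sat w2 a3 by apply/negP => /sat_a3 [].
  have n3 : ~~ sat w3 a3 by apply/negP => /sat_a3 [].
  have C1' : modsE Bel (contr Psi a3) w1 -> modsE Bel (contr Psi (a12 w1 w3)) w1.
    move=> Hw; apply: (SA Hcl HA _ Hw).
    - by move=> v /sat_a3 [? ? ?]; apply/sat_a12.
    - by apply/nsat_a12; left.
  have C2' : modsE Bel (contr Psi a3) w2 -> modsE Bel (contr Psi a3) w1.
    move=> Hw; apply: (AR HA _ Hw _ H12).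
    - by move=> v /sat_a3 [? ? ?]; apply/sat_a12.
    - by apply/nsat_a12; right.
  have C3' : modsE Bel (contr Psi a3) w3 -> modsE Bel (contr Psi a3) w2.
    move=> Hw; apply: (AR HA _ Hw _ H23).
    - by move=> v /sat_a3 [? ? ?]; apply/sat_a12.
    - by apply/nsat_a12; right.
  have [w [Hw Hn]] := W3 (Psi:=Psi) Hcl H3 n1.
  have : w = w1 \/ w = w2 \/ w = w3.
    apply: NNPP => Hne; move/negP: Hn; apply; apply/sat_a3; split => Ee; apply: Hne; auto.
  case=> [Ee|[Ee|Ee]]; subst w; auto.
- move=> w1 w2.
  have n1 : ~~ sat w1 (a12 w1 w2) by apply/nsat_a12; left.
  have [w [Hw Hn]] := W3 (Psi:=Psi) Hcl H3 n1.
  case/nsat_a12: Hn => Ee; subst w; [left | right] => //.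
  exact: (W5 H5 (a12C _ _) Hw).
Qed.

Lemma canon_faithful {Sigma : finType} {E : Type} {Bel : E -> fset Sigma} {contr : E -> form Sigma -> E}
  (Hcl : forall Psi, deductively_closed (Bel Psi)) (HA : AGM_contraction Bel contr) :
  faithful_assignment Bel (canon Bel contr).
Proof.
have HA' := HA; case: HA' => H1 [H2 [H3 [H4 [H5 [H6 H7]]]]].
split; first exact: canon_tp.
split.
- move=> Psi w1 w2 Hw1 Hw2; split; exact: W1.
- move=> Psi w1 w2 Hw1 Hw2; split; first exact: W1.
  move=> Hc; apply: Hw2; apply: (W2 H2 Hw1 _ Hc).
  by apply/nsat_a12; right.
Qed.

Lemma canon_rep {Sigma : finType} {E : Type} {Bel : E -> fset Sigma} {contr : E -> form Sigma -> E}
  (Hcl : forall Psi, deductively_closed (Bel Psi)) (HA : AGM_contraction Bel contr) :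
  represents Bel contr (canon Bel contr).
Proof.
have HA' := HA; case: HA' => H1 [H2 [H3 [H4 [H5 [H6 H7]]]]].
move=> Psi a w; split.
- move=> Hw; case: (classic (modsE Bel Psi w)) => HM; [by left | right].
  have Hn : ~~ sat w a by apply/negP => Ha; apply: HM; exact: (W4 H4 Hw).
  split => // w' Hw'.
  apply: (SA Hcl HA _ Hw).
  + move=> v Hv; apply/sat_a12; split => Ee; subst v; by move: Hv; apply/negP.
  + by apply/nsat_a12; left.
- case=> [HM|[Hn Hmin]]; first exact: W1.
  have [w0 [Hw0 Hn0]] := W3 (Psi:=Psi) Hcl H3 Hn.
  apply: (AR HA _ Hw0 _ (Hmin w0 Hn0)).
  + move=> v Hv; apply/sat_a12; split => Ee; subst v; by move: Hv; apply/negP.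
  + by apply/nsat_a12; right.
Qed.

Lemma C10w {Sigma : finType} {E : Type} {Bel : E -> fset Sigma} {contr : E -> form Sigma -> E}
  (Hcl : forall Psi, deductively_closed (Bel Psi)) (H10 : C10 Bel contr) {Psi a b w} :
  modsE Bel (contr (contr Psi a) b) w -> sat w a -> modsE Bel (contr Psi b) w.
Proof.
move=> Hw Ha f Hf.
have : sat w (fOr f (fNeg a)).
  apply: Hw; apply: H10.
  - by move=> v /= Hv; rewrite Hv orbT.
  - by apply: Hcl => v Hv /=; rewrite (Hv f Hf).
by rewrite /= Ha orbF.
Qed.

Lemma C11w {Sigma : finType} {E : Type} {Bel : E -> fset Sigma} {contr : E -> form Sigma -> E}
  (Hcl : forall Psi, deductively_closed (Bel Psi)) (H11 : C11 Bel contr) {Psi a b w} :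
  modsE Bel (contr Psi b) w -> ~~ sat w a -> modsE Bel (contr (contr Psi a) b) w.
Proof.
move=> Hw Hn f Hf.
have : sat w (fOr f a).
  apply: Hw; apply: (H11 Psi a b).
  - by move=> v /= Hv; rewrite Hv orbT.
  - by apply: Hcl => v Hv /=; rewrite (Hv f Hf).
by rewrite /= (negbTE Hn) orbF.
Qed.

Lemma canon_CR11 {Sigma : finType} {E : Type} {Bel : E -> fset Sigma} {contr : E -> form Sigma -> E}
  (Hcl : forall Psi, deductively_closed (Bel Psi)) (H11 : C11 Bel contr) :
  CR11 contr (canon Bel contr).
Proof. move=> Psi a w1 w2 Hn1 Ha2 H; exact: (C11w Hcl H11 H Hn1). Qed.

Lemma canon_CR10 {Sigma : finType} {E : Type} {Bel : E -> fset Sigma} {contr : E -> form Sigma -> E}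
  (Hcl : forall Psi, deductively_closed (Bel Psi)) (H10 : C10 Bel contr) (H11 : C11 Bel contr) :
  CR10 contr (canon Bel contr).
Proof.
move=> Psi a w1 w2 Hn1 Ha2 [H Hnot]; split; first exact: (canon_CR11 Hcl H11).
move=> H'; apply: Hnot; exact: (C10w Hcl H10 H' Ha2).
Qed.

Lemma le_canon {Sigma : finType} {E : Type} {Bel : E -> fset Sigma} {contr : E -> form Sigma -> E}
  (le : E -> world Sigma -> world Sigma -> Prop) :
  faithful_assignment Bel le -> represents Bel contr le ->
  forall Psi w1 w2, le Psi w1 w2 <-> canon Bel contr Psi w1 w2.
Proof.
move=> [Htp [Hf2 Hf3]] Hrep Psi w1 w2; rewrite /canon (Hrep Psi (a12 w1 w2) w1); split.
- move=> H; right; split; first by apply/nsat_a12; left.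
  move=> w' Hw'; case/nsat_a12: Hw' => -> //.
  by case: (proj2 (Htp Psi) w1 w1).
- case=> [HM|[_ Hmin]]; last by apply: Hmin; apply/nsat_a12; right.
  case: (classic (modsE Bel Psi w2)) => H2.
  + exact: (proj1 (Hf2 _ _ _ HM H2)).
  + exact: (proj1 (Hf3 _ _ _ HM H2)).
Qed.

Lemma b_C10 {Sigma : finType} {E : Type} {Bel : E -> fset Sigma} {contr : E -> form Sigma -> E}
  (Hcl : forall Psi, deductively_closed (Bel Psi)) (H8 : C8 Bel contr)
  (le : E -> world Sigma -> world Sigma -> Prop) :
  faithful_assignment Bel le -> represents Bel contr le -> CR10 contr le -> C10 Bel contr.
Proof.
move=> Hfa Hrep HCR.
have Hlc := le_canon le Hfa Hrep.
case: Hfa => [Htp _].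
have W : forall Psi a b w, modsE Bel (contr (contr Psi a) b) w -> sat w a ->
          modsE Bel (contr Psi b) w.
  move=> Psi a b w Hw Ha.
  case/(Hrep _ _ _): Hw => [HM | [Hnb Hmin]].
  - case/(Hrep _ _ _): HM => [HM | [Hna _]].
    + by apply/(Hrep _ _ _); left.
    + by rewrite /= Ha in Hna.
  - apply/(Hrep _ _ _); right; split => // w' Hw'.
    case: (boolP (sat w' a)) => Ha'.
    + have Hent : fentails (fNeg a) (a12 w w').
        move=> v /= Hv; apply/sat_a12; split => Ee; subst v.
        * by rewrite Ha in Hv.
        * by rewrite Ha' in Hv.
      apply/Hlc; rewrite /canon; apply/(H8 Psi a (a12 w w') Hent w Ha).
      by apply/Hlc; apply: Hmin.
    + apply: NNPP => Hnle.
      have Hs : strict (le Psi) w' w.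
        split => //; by case: (proj2 (Htp Psi) w w').
      have := HCR Psi a w' w Ha' Ha Hs.
      by case=> _; apply; apply: Hmin.
move=> Psi a b g Hng Hbg; apply: Hcl => w Hw.
case: (boolP (sat w a)) => Ha.
- exact: (W _ _ _ _ Hw Ha) g Hbg.
- exact: Hng.
Qed.

Lemma b_C11 {Sigma : finType} {E : Type} {Bel : E -> fset Sigma} {contr : E -> form Sigma -> E}
  (Hcl : forall Psi, deductively_closed (Bel Psi)) (H9 : C9 Bel contr)
  (le : E -> world Sigma -> world Sigma -> Prop) :
  faithful_assignment Bel le -> represents Bel contr le -> CR11 contr le -> C11 Bel contr.
Proof.
move=> Hfa Hrep HCR.
have Hlc := le_canon le Hfa Hrep.
have W : forall Psi a b w, modsE Bel (contr Psi b) w -> ~~ sat w a ->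
          modsE Bel (contr (contr Psi a) b) w.
  move=> Psi a b w Hw Hn.
  case/(Hrep _ _ _): Hw => [HM | [Hnb Hmin]].
  - by apply/(Hrep _ _ _); left; apply/(Hrep _ _ _); left.
  - apply/(Hrep _ _ _); right; split => // w' Hw'.
    case: (boolP (sat w' a)) => Ha'.
    + exact: (HCR Psi a w w' Hn Ha' (Hmin w' Hw')).
    + have Hent : fentails a (a12 w w').
        move=> v Hv; apply/sat_a12; split => Ee; subst v.
        * by rewrite Hv in Hn.
        * by rewrite Hv in Ha'.
      have Hw0 : sat w (fNeg (a12 w w')) by apply/nsat_a12; left.
      apply/Hlc; rewrite /canon; apply/(H9 Psi a (a12 w w') Hent w Hw0).
      by apply/Hlc; apply: Hmin.
move=> Psi a b g Hag Hbg; apply: Hcl => w Hw.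
case: (boolP (sat w a)) => Ha.
- exact: Hag.
- exact: (W _ _ _ _ Hw Ha) g Hbg.
Qed.

Theorem mainTheorem8 (Sigma : finType) (HSigma : 0 < #|Sigma|)
  (E : Type) (Bel : E -> fset Sigma)
  (Hclosed : forall Psi, deductively_closed (Bel Psi))
  (contr : E -> form Sigma -> E) :
  AGM_contraction Bel contr -> C8 Bel contr -> C9 Bel contr ->
  ((C10 Bel contr /\ C11 Bel contr) <->
   exists le : E -> world Sigma -> world Sigma -> Prop,
     faithful_assignment Bel le /\ represents Bel contr le /\
     CR10 contr le /\ CR11 contr le).
Proof.
move=> HA H8 H9; split.
- case=> H10 H11; exists (canon Bel contr); split; first exact: canon_faithful.
  split; first exact: canon_rep.
  split; [exact: canon_CR10 | exact: canon_CR11].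
- case=> le [Hfa [Hrep [HR10 HR11]]]; split.
  + exact: (b_C10 Hclosed H8 _ Hfa Hrep HR10).
  + exact: (b_C11 Hclosed H9 _ Hfa Hrep HR11).
Qed.
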